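(* Each of the logics $\mathbf{PD}$, $\mathsf{InqL}$ and $\mathbf{PT}$ is $\mathcal{F}$-structurally complete, where $\mathcal{F}$ is the class of all flat substitutions: for every such logic $\mathsf{L}$ and all formulas $\phi,\psi$ in the language of $\mathsf{L}$, if for every flat substitution $\sigma$ of $\mathsf{L}$, $\vdash_{\mathsf{L}}\sigma(\phi)$ implies $\vdash_{\mathsf{L}}\sigma(\psi)$, then $\phi\vdash_{\mathsf{L}}\psi$.
   Context: Fix a countably infinite set Prop of propositional variables. A valuation is a function $v:\mathrm{Prop}\to\{0,1\}$; a team is a set of valuations. Formulas of the extended propositional downwards closed team logic $\mathbf{PT}$ are given by $\phi::=p\mid\bot\mid\top\mid\,=\!(\phi_1,\dots,\phi_n,\phi)\mid\neg\phi\mid\phi\wedge\phi\mid\phi\otimes\phi\mid\phi\vee\phi\mid\phi\to\phi$ ($p\in\mathrm{Prop}$). Satisfaction of a formula on a team $X$: $X\models p$ iff $v(p)=1$ for all $v\in X$; $X\models\bot$ iff $X=\emptyset$; $X\models\top$ always; $X\models\phi\wedge\psi$ iff $X\models\phi$ and $X\models\psi$; $X\models\phi\otimes\psi$ iff $X=Y\cup Z$ for some $Y,Z\subseteq X$ with $Y\models\phi$, $Z\models\psi$; $X\models\phi\vee\psi$ iff $X\models\phi$ or $X\models\psi$; $X\models\phi\to\psi$ iff for every $Y\subseteq X$, $Y\models\phi$ implies $Y\models\psi$; $X\models\neg\phi$ iff $\{v\}\not\models\phi$ for all $v\in X$ (equivalently $X\models\phi\to\bot$); $X\models\,=\!(\phi_1,\dots,\phi_n,\psi)$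 iff $X\models\bigwedge_{i=1}^n(\phi_i\vee(\phi_i\to\bot))\to(\psi\vee(\psi\to\bot))$. A formula $\phi$ is flat if for every team $X$: $X\models\phi$ iff $\{v\}\models\phi$ for all $v\in X$. Formulas of the extended propositional dependence logic $\mathbf{PD}$ are given by $\phi::=p\mid\bot\mid\top\mid\,=\!(\alpha_1,\dots,\alpha_k,\beta)\mid\neg\phi\mid\phi\wedge\phi\mid\phi\otimes\phi$ where $\alpha_i,\beta$ are flat formulas of $\mathbf{PD}$; they are evaluated by the same clauses, where for flat arguments the dependence clause is equivalent to: $X\models\,=\!(\vec\alpha,\beta)$ iff for all $v,v'\in X$, if $\{v\}\models\alpha_i\Leftrightarrow\{v'\}\models\alpha_i$ for every $i$, then $\{v\}\models\beta\Leftrightarrow\{v'\}\models\beta$. Formulas of propositional inquisitive logic $\mathsf{InqL}$ are built from $p,\bot,\top$ using $\wedge,\vee,\to$ with the same clauses ($\neg\phi$ abbreviates $\phi\to\bot$). For finite $\Gamma$, $\Gamma\models\phi$ means every team satisfying all formulas of $\Gamma$ satisfies $\phi$; for $\mathsf{L}\in\{\mathbf{PD},\mathsf{InqL},\mathbf{PT}\}$, $\Gamma\vdash_{\mathsf{L}}\phi$ iff $\phi$ and all members of $\Gamma$ are in the language of $\mathsf{L}$ and $\Gamma\models\phi$; $\vdash_{\mathsf L}\phi$ means $\emptyset\vdash_{\mathsf L}\phi$. A substitution of $\mathsf{L}$ is a map from formulas of $\mathsf{L}$ to formulas of $\mathsf{L}$ commuting with all connectives and atoms (so $\sigma(\bot)=\bot$,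 $\sigma(\top)=\top$, $\sigma(\neg\phi)=\neg\sigma(\phi)$, $\sigma(\phi\circ\psi)=\sigma(\phi)\circ\sigma(\psi)$, $\sigma(=\!(\vec\phi,\psi))=\,=\!(\sigma(\vec\phi),\sigma(\psi))$); it is flat if $\sigma(p)$ is flat for every $p\in\mathrm{Prop}$. *)

(* Defs.v *)
From Stdlib Require Import List.
Import ListNotations.
Set Implicit Arguments.

Definition valuation := nat -> bool.
Definition team := valuation -> Prop.

Definition subteam (Y X : team) : Prop := forall v, Y v -> X v.
Definition empty_team (X : team) : Prop := forall v, ~ X v.
Definition singleton (v : valuation) : team := fun w => w = v.

(* Formulas of PT; [Dep l g] is the dependence atom =(l_1,...,l_n, g). *)
Inductive form : Type :=
| Var  : nat -> form
| Bot  : form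
| Top  : form
| Dep  : list form -> form -> form
| Neg  : form -> form
| And  : form -> form -> form
| Tens : form -> form -> form
| Or   : form -> form -> form
| Imp  : form -> form -> form.

Fixpoint sat (X : team) (f : form) {struct f} : Prop :=
  match f with
  | Var p => forall v, X v -> v p = true
  | Bot => empty_team X
  | Top => True
  | Dep l g =>
      (* X |= /\_i (l_i \/ (l_i -> Bot)) -> (g \/ (g -> Bot)) *)
      forall Y, subteam Y X ->
        (fix allc (l : list form) : Prop :=
           match l with
           | [] => True
           | h :: t =>
               (sat Y h \/ (forall Z, subteam Z Y -> sat Z h -> empty_team Z))
               /\ allc t
           end) l ->
        (sat Y g \/ (forall Z, subteam Z Y -> sat Z g -> empty_team Z))
  | Neg g => forall v, X v -> ~ sat (singleton v) g
  | And g h => sat X g /\ sat X h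
  | Tens g h => exists Y Z, subteam Y X /\ subteam Z X /\
                  (forall v, X v -> Y v \/ Z v) /\ sat Y g /\ sat Z h
  | Or g h => sat X g \/ sat X h
  | Imp g h => forall Y, subteam Y X -> sat Y g -> sat Y h
  end.

Definition flat (f : form) : Prop :=
  forall X, sat X f <-> (forall v, X v -> sat (singleton v) f).

Fixpoint inPD (f : form) : Prop :=
  match f with
  | Var _ | Bot | Top => True
  | Dep l g =>
      (fix allc (l : list form) : Prop :=
         match l with
         | [] => True
         | h :: t => (inPD h /\ flat h) /\ allc t
         end) l /\ (inPD g /\ flat g)
  | Neg g => inPD g
  | And g h | Tens g h => inPD g /\ inPD h
  | Or _ _ | Imp _ _ => False
  end.

(* Language of InqL: p, Bot, Top, And, Or, Imp (negation is an abbreviation). *)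
Fixpoint inInqL (f : form) : Prop :=
  match f with
  | Var _ | Bot | Top => True
  | And g h | Or g h | Imp g h => inInqL g /\ inInqL h
  | _ => False
  end.

Inductive logic : Type := PD | InqL | PT.

Definition inL (L : logic) (f : form) : Prop :=
  match L with
  | PD => inPD f
  | InqL => inInqL f
  | PT => True
  end.

Fixpoint subst (s : nat -> form) (f : form) : form :=
  match f with
  | Var p => s p
  | Bot => Bot
  | Top => Top
  | Dep l g => Dep (map (subst s) l) (subst s g)
  | Neg g => Neg (subst s g)
  | And g h => And (subst s g) (subst s h)
  | Tens g h => Tens (subst s g) (subst s h)
  | Or g h => Or (subst s g) (subst s h)
  | Imp g h => Imp (subst s g) (subst s h)
  end.

Definition subst_of (L : logic) (s : nat -> form) : Prop :=
  forall f, inL L f -> inL L (subst s f).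

Definition flat_subst (L : logic) (s : nat -> form) : Prop :=
  subst_of L s /\ forall p, flat (s p).

Definition entails (f g : form) : Prop := forall X, sat X f -> sat X g.
Definition valid (f : form) : Prop := forall X, sat X f.

Definition derivesL (L : logic) (f g : form) : Prop :=
  inL L f /\ inL L g /\ entails f g.
Definition provableL (L : logic) (f : form) : Prop :=
  inL L f /\ valid f.

(* Main.v *)
Require Import Defs.
From Stdlib Require Import List Classical ClassicalEpsilon FunctionalExtensionality PropExtensionality Lia Arith Bool.
Import ListNotations.

Definition form_ind2 (P : form -> Prop)
  (HV : forall n, P (Var n)) (HB : P Bot) (HT : P Top)
  (HD : forall l g, Forall P l -> P g -> P (Dep l g))
  (HN : forall g, P g -> P (Neg g))
  (HA : forall g h, P g -> P h -> P (And g h))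
  (HTs : forall g h, P g -> P h -> P (Tens g h))
  (HO : forall g h, P g -> P h -> P (Or g h))
  (HI : forall g h, P g -> P h -> P (Imp g h)) : forall f, P f :=
  fix F (f : form) : P f :=
    match f as f0 return P f0 with
    | Var n => HV n | Bot => HB | Top => HT
    | Dep l g => HD l g ((fix G (l : list form) : Forall P l :=
         match l as l0 return Forall P l0 with
         | [] => Forall_nil P
         | h :: t => @Forall_cons _ P h t (F h) (G t) end) l) (F g)
    | Neg g => HN g (F g)
    | And g h => HA g h (F g) (F h)
    | Tens g h => HTs g h (F g) (F h)
    | Or g h => HO g h (F g) (F h)
    | Imp g h => HI g h (F g) (F h)
    end.

Definition dec (Y : team) (a : form) : Prop :=
  sat Y a \/ (forall Z, subteam Z Y -> sat Z a -> empty_team Z).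

Definition allc (Y : team) : list form -> Prop :=
  fix allc (l : list form) : Prop :=
           match l with
           | [] => True
           | h :: t =>
               (sat Y h \/ (forall Z, subteam Z Y -> sat Z h -> empty_team Z))
               /\ allc t
           end.

Lemma sat_Dep X l g : sat X (Dep l g) <-> forall Y, subteam Y X -> allc Y l -> dec Y g.
Proof. reflexivity. Qed.

Fixpoint allPD (l: list form) : Prop := match l with [] => True | h::t => (inPD h /\ flat h) /\ allPD t end.
Lemma inPD_Dep l g : inPD (Dep l g) <-> allPD l /\ (inPD g /\ flat g).
Proof. reflexivity. Qed.
Definition img (h : valuation -> valuation) (Y : team) : team := fun v => exists w, Y w /\ h w = v.
Definition pre (h : valuation -> valuation) (Y Z : team) : team := fun w => Y w /\ Z (h w).

Lemma img_pre h Y Z : subteam Z (img h Y) -> img h (pre h Y Z) = Z.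
Proof.
  intros HZ. apply functional_extensionality; intro v. apply propositional_extensionality.
  unfold img, pre; split.
  - intros [w [[_ Hw] <-]]; exact Hw.
  - intros Hv. destruct (HZ v Hv) as [w [Yw <-]]. exists w; auto.
Qed.

Lemma img_sub h Y Y' : subteam Y' Y -> subteam (img h Y') (img h Y).
Proof. intros H v [w [Hw <-]]; exists w; auto. Qed.

Lemma pre_sub h Y Z : subteam (pre h Y Z) Y.
Proof. intros w [Hw _]; auto. Qed.

Lemma img_single h w : img h (singleton w) = singleton (h w).
Proof.
  apply functional_extensionality; intro v. apply propositional_extensionality.
  unfold img, singleton; split.
  - intros [u [-> <-]]; auto.
  - intros ->; exists w; auto.
Qed.

Lemma empty_img h Y : empty_team (img h Y) <-> empty_team Y.
Proof.
  unfold empty_team, img; split.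
  - intros H w Hw. apply (H (h w)). exists w; auto.
  - intros H v [w [Hw _]]. exact (H w Hw).
Qed.

Lemma transfer h (A B A' B' : team -> Prop) :
  (forall Y, A Y <-> A' (img h Y)) -> (forall Y, B Y <-> B' (img h Y)) ->
  forall Y, (forall Y', subteam Y' Y -> A Y' -> B Y') <->
            (forall Z, subteam Z (img h Y) -> A' Z -> B' Z).
Proof.
  intros HA HB Y; split.
  - intros H Z HZ HAZ.
    pose proof (HA (pre h Y Z)) as HA1. pose proof (HB (pre h Y Z)) as HB1.
    rewrite img_pre in HA1, HB1 by exact HZ.
    apply HB1, H; [apply pre_sub | apply HA1; exact HAZ].
  - intros H Y' HY' HAY. apply HB, H.
    + apply img_sub; exact HY'.
    + apply HA; exact HAY.
Qed.

Lemma dec_transfer h a b : (forall Y, sat Y b <-> sat (img h Y) a) ->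
  forall Y, dec Y b <-> dec (img h Y) a.
Proof.
  intros Hab Y. unfold dec.
  pose proof (transfer h (fun Z => sat Z b) empty_team (fun Z => sat Z a) empty_team
     Hab (fun Z => iff_sym (empty_img h Z)) Y) as T.
  rewrite Hab. tauto.
Qed.

Lemma key (s : nat -> form) (h : valuation -> valuation)
  (Hs : forall p, flat (s p)) (Hh : forall w p, sat (singleton w) (s p) <-> h w p = true) :
  forall f Y, sat Y (subst s f) <-> sat (img h Y) f.
Proof.
  induction f using form_ind2; intro Y.
  - simpl. rewrite (Hs n Y). split.
    + intros H v [w [Hw <-]]. apply Hh, H, Hw.
    + intros H w Hw. apply Hh, H. exists w; auto.
  - simpl. symmetry; apply empty_img.
  - simpl; tauto.
  - change (sat Y (Dep (map (subst s) l) (subst s f)) <-> sat (img h Y) (Dep l f)).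
    rewrite !sat_Dep. apply transfer.
    + clear Y. intro Y. induction H as [|a l Ha Hl IHl]; simpl; [tauto|].
      pose proof (dec_transfer h a (subst s a) Ha Y) as D. unfold dec in D.
      rewrite D, IHl. tauto.
    + apply dec_transfer. exact IHf.
  - simpl. split.
    + intros H v [w [Hw <-]]. rewrite <- img_single, <- IHf. apply H, Hw.
    + intros H w Hw. rewrite IHf, img_single. apply H. exists w; auto.
  - simpl. rewrite IHf1, IHf2. tauto.
  - simpl. split.
    + intros [Y1 [Z1 [H1 [H2 [H3 [H4 H5]]]]]].
      exists (img h Y1), (img h Z1). repeat split.
      * apply img_sub; auto.
      * apply img_sub; auto.
      * intros v [w [Hw <-]]. destruct (H3 w Hw); [left|right]; exists w; auto.
      * apply IHf1; auto.
      * apply IHf2; auto.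
    + intros [Y2 [Z2 [H1 [H2 [H3 [H4 H5]]]]]].
      exists (pre h Y Y2), (pre h Y Z2). repeat split.
      * apply pre_sub.
      * apply pre_sub.
      * intros w Hw. destruct (H3 (h w)) as [A|A]. { exists w; auto. }
        left; split; auto. right; split; auto.
      * rewrite IHf1, img_pre; auto.
      * rewrite IHf2, img_pre; auto.
  - simpl. rewrite IHf1, IHf2. tauto.
  - simpl. apply transfer; auto.
Qed.
Lemma dc : forall f X Y, sat X f -> subteam Y X -> sat Y f.
Proof.
  induction f; intros X Y HX HY; simpl in *.
  - intros v Hv; apply HX, HY, Hv.
  - intros v Hv; apply (HX v), HY, Hv.
  - auto.
  - intros Z HZ. apply HX. intros v Hv; apply HY, HZ, Hv.
  - intros v Hv; apply HX, HY, Hv.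
  - destruct HX; split; eauto.
  - destruct HX as [Y1 [Z1 [H1 [H2 [H3 [H4 H5]]]]]].
    exists (fun v => Y1 v /\ Y v), (fun v => Z1 v /\ Y v). repeat split.
    + intros v [_ Hv]; auto.
    + intros v [_ Hv]; auto.
    + intros v Hv. destruct (H3 v (HY v Hv)); [left|right]; auto.
    + apply (IHf1 Y1); auto. intros v [Hv _]; auto.
    + apply (IHf2 Z1); auto. intros v [Hv _]; auto.
  - destruct HX; [left|right]; eauto.
  - intros Z HZ. apply HX. intros v Hv; apply HY, HZ, Hv.
Qed.

Lemma sat_empty : forall f X, empty_team X -> sat X f.
Proof.
  induction f; intros X HX; simpl in *.
  - intros v Hv; destruct (HX v Hv).
  - auto.
  - auto.
  - intros Y HY _. left. apply IHf. intros v Hv; apply (HX v), HY, Hv.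
  - intros v Hv; destruct (HX v Hv).
  - auto.
  - exists X, X. split; [intros v Hv; exact Hv|]. split; [intros v Hv; exact Hv|].
    split; [intros v Hv; left; exact Hv|]. split; auto.
  - left; auto.
  - intros Y HY _. apply IHf2. intros v Hv; apply (HX v), HY, Hv.
Qed.

Definition hcl (s : nat -> form) : valuation -> valuation :=
  fun w p => if excluded_middle_informative (sat (singleton w) (s p)) then true else false.

Lemma hcl_spec s w p : sat (singleton w) (s p) <-> hcl s w p = true.
Proof.
  unfold hcl. destruct excluded_middle_informative; split; auto; discriminate.
Qed.

Lemma flat_subst_flat s : (forall p, flat (s p)) -> forall f, flat f -> flat (subst s f).
Proof.
  intros Hs f Hf. unfold flat. intro X.
  pose proof (key s (hcl s) Hs (hcl_spec s)) as K.
  rewrite K, (Hf (img (hcl s) X)). split.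
  - intros H w Hw. rewrite K, img_single. apply H. exists w; auto.
  - intros H v [w [Hw <-]]. rewrite <- img_single, <- K. apply H, Hw.
Qed.

Lemma subst_of_lemma L s : (forall p, inL L (s p) /\ flat (s p)) -> subst_of L s.
Proof.
  intros Hs. destruct L; intros f Hf; simpl in *.
  - revert Hf. induction f using form_ind2; simpl; intros Hf; try tauto.
    + apply (Hs n).
    + change (allPD (map (subst s) l) /\ inPD (subst s f) /\ flat (subst s f)).
      change (allPD l /\ inPD f /\ flat f) in Hf. destruct Hf as [Hl [Hg Hfg]].
      split; [|split; [auto| apply flat_subst_flat; [intro; apply Hs | auto]]].
      clear Hg Hfg IHf. induction H; simpl in *; auto.
      destruct Hl as [[Ha Hfa] Hl]. split; [split|]; auto.
      apply flat_subst_flat; [intro; apply Hs | auto].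
  - revert Hf. induction f; simpl; intros Hf; try tauto.
    apply (Hs n).
  - auto.
Qed.

Definition bounded (f : form) := exists K, forall s, (forall p, p < K -> s p = Var p) -> subst s f = f.

Lemma all_bounded : forall f, bounded f.
Proof.
  induction f using form_ind2; unfold bounded in *.
  - exists (S n); intros s H; simpl; apply H; lia.
  - exists 0; auto.
  - exists 0; auto.
  - destruct IHf as [K HK].
    assert (exists K', forall s, (forall p, p < K' -> s p = Var p) -> map (subst s) l = l) as [K' HK'].
    { induction H as [|a l [Ka Ha] Hl IHl].
      - exists 0; auto.
      - destruct IHl as [Kl Hl']. exists (max Ka Kl). intros s Hs; simpl.
        rewrite Ha, Hl'; auto; intros; apply Hs; lia. }
    exists (max K K'). intros s Hs; simpl. rewrite HK, HK'; auto; intros; apply Hs; lia.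
  - destruct IHf as [K HK]. exists K; intros s Hs; simpl; rewrite HK; auto.
  - destruct IHf1 as [K1 H1], IHf2 as [K2 H2]. exists (max K1 K2); intros s Hs; simpl;
      rewrite H1, H2; auto; intros; apply Hs; lia.
  - destruct IHf1 as [K1 H1], IHf2 as [K2 H2]. exists (max K1 K2); intros s Hs; simpl;
      rewrite H1, H2; auto; intros; apply Hs; lia.
  - destruct IHf1 as [K1 H1], IHf2 as [K2 H2]. exists (max K1 K2); intros s Hs; simpl;
      rewrite H1, H2; auto; intros; apply Hs; lia.
  - destruct IHf1 as [K1 H1], IHf2 as [K2 H2]. exists (max K1 K2); intros s Hs; simpl;
      rewrite H1, H2; auto; intros; apply Hs; lia.
Qed.
Definition good L M (P : valuation -> Prop) :=
  inL L M /\ forall X, sat X M <-> (forall v, X v -> P v).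

Lemma good_single L M P w : good L M P -> (sat (singleton w) M <-> P w).
Proof.
  intros [_ H]. rewrite H. unfold singleton. split; [intro A; apply A; auto | intros A v ->; auto].
Qed.

Lemma good_flat L M P : good L M P -> flat M.
Proof.
  intros G X. pose proof G as [_ H]. rewrite H. split.
  - intros A v Hv. apply (good_single L M P v G). apply A, Hv.
  - intros A v Hv. apply (good_single L M P v G). apply A, Hv.
Qed.

Lemma good_ext L M P Q : good L M P -> (forall w, P w <-> Q w) -> good L M Q.
Proof.
  intros [HL H] E. split; auto. intro X. rewrite H. split; intros A v Hv; apply E, A, Hv.
Qed.

Lemma good_Var L p : good L (Var p) (fun w => w p = true).
Proof. split; [destruct L; simpl; auto | simpl; tauto]. Qed.

Lemma good_Top L : good L Top (fun _ => True).
Proof. split; [destruct L; simpl; auto | simpl; tauto]. Qed.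

Lemma good_Bot L : good L Bot (fun _ => False).
Proof. split; [destruct L; simpl; auto | simpl; unfold empty_team; firstorder]. Qed.

Lemma good_const L (b : bool) : good L (if b then Top else Bot) (fun _ => b = true).
Proof.
  destruct b; [eapply good_ext; [apply good_Top|] | eapply good_ext; [apply good_Bot|]];
  simpl; intuition discriminate.
Qed.

Lemma good_And L a b P Q : good L a P -> good L b Q -> good L (And a b) (fun w => P w /\ Q w).
Proof.
  intros [La Ha] [Lb Hb]. split.
  - destruct L; simpl in *; tauto.
  - intro X; simpl. rewrite Ha, Hb. firstorder.
Qed.

Definition negL L a := match L with InqL => Imp a Bot | _ => Neg a end.

Lemma good_neg L a P : good L a P -> good L (negL L a) (fun w => ~ P w).
Proof.
  intros G. pose proof G as [La Ha]. split.
  - destruct L; simpl in *; tauto.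
  - intro X. destruct L; simpl.
    1,3: split; [intros A v Hv; rewrite <- (good_single _ _ _ v G); apply A, Hv
              | intros A v Hv; rewrite (good_single _ _ _ v G); apply A, Hv].
    split.
    + intros A v Hv Pv. apply (A (singleton v) ltac:(intros u ->; auto)
         ltac:(apply (good_single _ _ _ v G); auto) v). reflexivity.
    + intros A Y HY SY u Yu. rewrite Ha in SY. apply (A u (HY u Yu)), SY, Yu.
Qed.

Definition disjL L a b := negL L (And (negL L a) (negL L b)).

Lemma good_disj L a b P Q : good L a P -> good L b Q -> good L (disjL L a b) (fun w => P w \/ Q w).
Proof.
  intros Ga Gb. eapply good_ext.
  - apply good_neg, good_And; apply good_neg; eauto.
  - intro w. destruct (classic (P w)); tauto.
Qed.

Lemma charac L : forall k (T : team), exists M,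
  good L M (fun w => exists x, T x /\ forall p, p < k -> x p = w p).
Proof.
  induction k; intro T.
  - destruct (classic (exists x, T x)) as [[x Hx]|Hn].
    + exists Top. eapply good_ext; [apply good_Top|]. intro w; split; auto.
      intros _; exists x; split; auto; intros; lia.
    + exists Bot. eapply good_ext; [apply good_Bot|]. intro w; split; [tauto|].
      intros [x [Hx _]]; apply Hn; eauto.
  - destruct (IHk (fun x => T x /\ x k = true)) as [M1 H1].
    destruct (IHk (fun x => T x /\ x k = false)) as [M0 H0].
    exists (disjL L (And (Var k) M1) (And (negL L (Var k)) M0)).
    eapply good_ext.
    + apply good_disj; apply good_And; [apply good_Var| exact H1 | apply good_neg, good_Var | exact H0].
    + intro w. split.
      * intros [[Hk [x [[Tx Xk] Ag]]]|[Hk [x [[Tx Xk] Ag]]]]; exists x; split; auto;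
          intros p Hp; (assert (p < k \/ p = k) as [|] by lia; [auto| subst p]).
        -- congruence.
        -- destruct (w k); congruence.
      * intros [x [Tx Ag]]. destruct (w k) eqn:E.
        -- left; split; auto. exists x; repeat split; auto. rewrite Ag; auto.
        -- right; split; [congruence|]. exists x; repeat split; auto. rewrite Ag; auto.
Qed.
Theorem theorem5p4 :
  forall (L : logic) (phi psi : form),
    inL L phi -> inL L psi ->
    (forall s : nat -> form, flat_subst L s ->
       provableL L (subst s phi) -> provableL L (subst s psi)) ->
    derivesL L phi psi.
Proof.
  intros L phi psi Hphi Hpsi H.
  split; [auto|split; [auto|]]. intros X HX.
  destruct (classic (sat X psi)) as [|Hn]; [auto|exfalso].
  destruct (all_bounded phi) as [K1 B1]. destruct (all_bounded psi) as [K2 B2].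
  set (K := max K1 K2).
  assert (exists x0, X x0) as [x0 Hx0].
  { apply NNPP; intro E. apply Hn, sat_empty. intros v Hv; apply E; eauto. }
  set (mem := fun w => exists x, X x /\ forall p, p < K -> x p = w p).
  destruct (charac L K X) as [M HM].
  set (s := fun p => if p <? K then disjL L (And M (Var p)) (And (negL L M) (if x0 p then Top else Bot)) else Bot).
  assert (Gs : forall p, good L (s p) (fun w => p < K /\ ((mem w /\ w p = true) \/ (~ mem w /\ x0 p = true)))).
  { intro p. unfold s. destruct (Nat.ltb_spec p K).
    - eapply good_ext.
      + apply good_disj; apply good_And; [exact HM | apply good_Var | apply good_neg, HM | apply good_const].
      + intro w; unfold mem; tauto.
    - eapply good_ext; [apply good_Bot|]. intro; split; [tauto|lia]. }
  set (z := fun (x : valuation) p => if p <? K then x p else false).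
  set (s0 := fun p => if p <? K then Var p else Bot).
  assert (G0 : forall p, good L (s0 p) (fun w => z w p = true)).
  { intro p; unfold s0, z. destruct (Nat.ltb_spec p K).
    - apply good_Var.
    - eapply good_ext; [apply good_Bot|]. intro; split; [tauto|discriminate]. }
  assert (K0 := key s0 z (fun p => good_flat _ _ _ (G0 p)) (fun w p => good_single _ _ _ w (G0 p))).
  assert (S1 : subst s0 phi = phi).
  { apply B1. intros p Hp. unfold s0. destruct (Nat.ltb_spec p K); auto; lia. }
  assert (S2 : subst s0 psi = psi).
  { apply B2. intros p Hp. unfold s0. destruct (Nat.ltb_spec p K); auto; lia. }
  assert (P1 : sat (img z X) phi). { rewrite <- K0, S1; auto. }
  assert (P2 : ~ sat (img z X) psi). { rewrite <- K0, S2; auto. }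
  assert (Hfl : forall p, flat (s p)) by (intro p; apply (good_flat _ _ _ (Gs p))).
  assert (FS : flat_subst L s).
  { split; auto. apply subst_of_lemma. intro p; split; auto. apply (Gs p). }
  set (h := hcl s).
  assert (Kh := key s h Hfl (hcl_spec s)).
  assert (hv1 : forall w, mem w -> h w = z w).
  { intros w Hw. apply functional_extensionality; intro p. apply (proj2 (eq_iff_eq_true _ _)).
    unfold h. rewrite <- hcl_spec, (good_single _ _ _ w (Gs p)). unfold z.
    destruct (Nat.ltb_spec p K); [tauto | split; [intros [? _]; lia | discriminate]]. }
  assert (hv2 : forall w, ~ mem w -> h w = z x0).
  { intros w Hw. apply functional_extensionality; intro p. apply (proj2 (eq_iff_eq_true _ _)).
    unfold h. rewrite <- hcl_spec, (good_single _ _ _ w (Gs p)). unfold z.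
    destruct (Nat.ltb_spec p K); [tauto | split; [intros [? _]; lia | discriminate]]. }
  assert (C1 : forall Y, subteam (img h Y) (img z X)).
  { intros Y v [w [_ <-]]. destruct (classic (mem w)) as [Hm|Hm].
    - rewrite hv1 by auto. destruct Hm as [x [Xx Ag]]. exists x; split; auto.
      apply functional_extensionality; intro p. unfold z. destruct (Nat.ltb_spec p K); auto.
    - rewrite hv2 by auto. exists x0; auto. }
  assert (C2 : subteam (img z X) (img h (fun _ => True))).
  { intros v [x [Xx <-]]. exists (z x); split; auto.
    rewrite hv1.
    - apply functional_extensionality; intro p. unfold z. destruct (Nat.ltb_spec p K); auto.
    - exists x; split; auto. intros p Hp. unfold z. destruct (Nat.ltb_spec p K); auto; lia. }
  destruct (H s FS) as [_ V].
  - split.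
    + apply (proj1 FS); auto.
    + intro Y. rewrite Kh. apply (dc phi (img z X)); auto.
  - apply P2. apply (dc psi (img h (fun _ => True))); auto. rewrite <- Kh. apply V.
Qed.
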